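(* Let $k \ge 1$, $r \ge 0$ and $m \in [0,k]$ be integers, let $\mathcal{P} \subseteq \mathcal{X}$ be a finite point set, and let $\mathcal{U}, \mathcal{V} \subseteq \mathcal{X}$ be sets of centers with $|\mathcal{U}| = k$ and $|\mathcal{V}| = k + r$. If the number of well-separated pairs with respect to $(\mathcal{U},\mathcal{V})$ is $k - m$, then there exists a subset $\tilde{\mathcal{U}} \subseteq \mathcal{U}$ of size at most $k - \lfloor (m-r)/4 \rfloor$ such that $\mathrm{cost}(\tilde{\mathcal{U}}, \mathcal{P}) \le 6\gamma \cdot \bigl(\mathrm{cost}(\mathcal{U},\mathcal{P}) + \mathrm{cost}(\mathcal{V},\mathcal{P})\bigr)$.
   Context: $(\mathcal{X}, d)$ is a metric space. For $\mathcal{W} \subseteq \mathcal{X}$ and $p \in \mathcal{X}$, $d(p,\mathcal{W}) = \min_{q \in \mathcal{W}} d(p,q)$, and $\mathrm{cost}(\mathcal{W},\mathcal{P}) = \sum_{p \in \mathcal{P}} d(p,\mathcal{W})$. The constant $\gamma$ equals $4000$. For $\mathcal{U},\mathcal{V} \subseteq \mathcal{X}$, a pair $(u,v) \in \mathcal{U} \times \mathcal{V}$ is well-separated with respect to $(\mathcal{U},\mathcal{V})$ if $d(u, \mathcal{U} \setminus \{u\}) \ge \gamma \cdot d(u,v)$ and $d(v, \mathcal{V} \setminus \{v\}) \ge \gamma \cdot d(u,v)$. *)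

(* Defs.v *)
From HB Require Import structures.
From mathcomp Require Import all_boot all_order all_algebra.
From mathcomp Require Import finmap.
Set Implicit Arguments. Unset Strict Implicit. Unset Printing Implicit Defensive.
Import Order.TTheory GRing.Theory Num.Theory.
Local Open Scope fset_scope.
Local Open Scope ring_scope.

Definition is_metric (R : realFieldType) (X : choiceType) (d : X -> X -> R) : Prop :=
  [/\ forall x y, 0 <= d x y,
      forall x y, d x y = 0 <-> x = y,
      forall x y, d x y = d y x
    & forall x y z, d x z <= d x y + d y z].

(* d(p, W) = min_{q in W} d(p, q)  (only meaningful for W nonempty;
   returns 0 for W empty, a case never used below) *)
Definition dist_set (R : realFieldType) (X : choiceType) (d : X -> X -> R)
  (p : X) (W : {fset X}) : R :=
  match enum_fset W with
  | [::] => 0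
  | q0 :: s => \big[Num.min/d p q0]_(q <- s) d p q
  end.

Definition cost (R : realFieldType) (X : choiceType) (d : X -> X -> R)
  (W P : {fset X}) : R :=
  \sum_(p <- P) dist_set d p W.

Definition gamma (R : realFieldType) : R := 4000%:R.

(* d(x, S \ {x}) >= c, with the convention min over the empty set = +oo *)
Definition far_from_others (R : realFieldType) (X : choiceType) (d : X -> X -> R)
  (x : X) (S : {fset X}) (c : R) : bool :=
  all (fun y => (y == x) || (c <= d x y)) (enum_fset S).

Definition well_separated (R : realFieldType) (X : choiceType) (d : X -> X -> R)
  (U V : {fset X}) (u v : X) : bool :=
  [&& u \in U, v \in V,
      far_from_others d u U (gamma R * d u v)
    & far_from_others d v V (gamma R * d u v)].

Definition num_well_separated (R : realFieldType) (X : choiceType) (d : X -> X -> R)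
  (U V : {fset X}) : nat :=
  \sum_(u <- U) \sum_(v <- V) (well_separated d U V u v : nat).

(* Main.v *)
Require Import Defs.
From HB Require Import structures.
From mathcomp Require Import all_boot all_order all_algebra.
From mathcomp Require Import finmap zify ring lra.
Set Implicit Arguments. Unset Strict Implicit. Unset Printing Implicit Defensive.
Import Order.TTheory GRing.Theory Num.Theory.
Local Open Scope fset_scope.
Section Graph.
Variables (X : choiceType) (n : X -> X).

Definition validS (S : {fset X}) :=
  forall u, u \in S -> ~~ ((n u \in S) && (n (n u) \in S)).

Lemma step (A T Rm S' : {fset X}) :
  T `<=` A -> T `<=` Rm -> (#|` A `&` Rm| <= 2 * #|` T|)%N ->
  (forall u, u \in T -> ~~ ((n u \in T) || (n u \in A `\` Rm)) \/
                        ~~ ((n (n u) \in T) || (n (n u) \in A `\` Rm))) ->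
  (forall u, u \in A `\` Rm -> n u \notin T) ->
  (forall u, u \in A `\` Rm -> n u \in A `\` Rm -> n (n u) \notin T) ->
  S' `<=` A `\` Rm -> (#|` A `\` Rm| <= 2 * #|` S'|)%N -> validS S' ->
  exists S : {fset X}, [/\ S `<=` A, (#|` A| <= 2 * #|` S|)%N & validS S].
Proof.
move=> TA TR hc H1 H2 H3 SA' hS' vS'.
exists (T `|` S'); split.
- by rewrite fsubUset TA (fsubset_trans SA') ?fsubsetDl.
- have disj : T `&` S' = fset0.
    apply/eqP; rewrite -fsubset0; apply/fsubsetP => x; rewrite in_fsetI => /andP[xT xS].
    move/fsubsetP: SA' => /(_ x xS); rewrite in_fsetD => /andP[/negP []].
    by move/fsubsetP: TR; apply.
  have := cardfsUI T S'; rewrite disj cardfs0 addn0 => ->.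
  have := cardfsID Rm A; lia.
- move=> u; rewrite in_fsetU => /orP[uT|uS].
  + have inS : forall x, (x \in T `|` S') -> (x \in T) || (x \in A `\` Rm).
      move=> x; rewrite in_fsetU => /orP[->//|xS]; apply/orP; right.
      by move/fsubsetP: SA'; apply.
    case: (H1 u uT) => /negP Hn; apply/negP => /andP[/inS ? /inS ?]; exact: Hn.
  + have uA : u \in A `\` Rm by move/fsubsetP: SA'; apply.
    apply/negP; rewrite !in_fsetU => /andP[/orP[nT|nS] /orP[nnT|nnS]].
    * by move: (H2 u uA); rewrite nT.
    * by move: (H2 u uA); rewrite nT.
    * have nA : n u \in A `\` Rm by move/fsubsetP: SA'; apply.
      by move: (H3 u uA nA); rewrite nnT.
    * by move: (vS' u uS); rewrite nS nnS.
Qed.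

Lemma cardU1_le (x : X) (B : {fset X}) : (#|` x |` B| <= #|` B|.+1)%N.
Proof. by rewrite cardfsU1; case: (x \notin B). Qed.

Lemma cardI_le (A B : {fset X}) : (#|` A `&` B| <= #|` B|)%N.
Proof. by apply: fsubset_leq_card; apply: fsubsetIr. Qed.

Lemma cardU_le (A B : {fset X}) : (#|` A `|` B| <= #|` A| + #|` B|)%N.
Proof. by rewrite cardfsU leq_subr. Qed.

Lemma card4_le (z a b c : X) : (#|` [fset z; a; b; c]| <= 4)%N.
Proof.
apply: leq_trans (cardU_le _ _) _; rewrite cardfs1.
apply: leq_trans (leq_add (cardU_le _ _) (leqnn 1)) _; rewrite cardfs1.
apply: leq_trans (leq_add (leq_add (cardU_le _ _) (leqnn 1)) (leqnn 1)) _.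
by rewrite !cardfs1.
Qed.

Lemma decr (A Rm : {fset X}) a : a \in A -> a \in Rm -> (#|` A `\` Rm| < #|` A|)%N.
Proof.
move=> aA aR; have := cardfsID Rm A.
have : (0 < #|` A `&` Rm|)%N.
  by rewrite cardfs_gt0; apply/fset0Pn; exists a; rewrite in_fsetI aA aR.
lia.
Qed.

Lemma graph_main N : forall A : {fset X}, (#|` A| <= N)%N ->
  {in A, forall x, n x != x} ->
  exists S : {fset X}, [/\ S `<=` A, (#|` A| <= 2 * #|` S|)%N & validS S].
Proof.
elim: N => [|N IH] A hA hn.
  exists fset0; split; first by rewrite fsub0set.
    by rewrite cardfs0; lia.
  by move=> u; rewrite inE.
have rec : forall Rm, (exists2 a, a \in A & a \in Rm) ->
    exists S', [/\ S' `<=` A `\` Rm, (#|` A `\` Rm| <= 2 * #|` S'|)%N & validS S'].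
  move=> Rm [a aA aR]; apply: IH.
    by have := decr aA aR; lia.
  by move=> x; rewrite in_fsetD => /andP[_ xA]; apply: hn.
case: (boolP (has (fun a => all (fun x => n x != a) (enum_fset A)) (enum_fset A))).
- case/hasP => a aA /allP noPre.
  have {}noPre : forall x, x \in A -> n x != a by move=> x xA; apply: noPre.
  set b := n a.
  have ba : b != a by apply: hn.
  have [S' [SA hS vS]] := rec [fset a; b] (ex_intro2 _ _ a aA (fset21 _ _)).
  apply: (step (T := [fset a]) (Rm := [fset a; b])) SA hS vS.
  + by rewrite fsub1set.
  + by rewrite fsub1set fset21.
  + by rewrite cardfs1; apply: leq_trans (cardI_le _ _) _; rewrite cardfs2; case: (_ != _).
  + move=> u; rewrite inE => /eqP ->; left.
    by rewrite !inE negb_or -/b ba /= negb_and eqxx orbT.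
  + by move=> u; rewrite in_fsetD => /andP[_ uA]; rewrite inE; apply: noPre.
  + move=> u _; rewrite in_fsetD => /andP[_ uA]; rewrite inE.
    exact: (noPre (n u) uA).
- move=> allPre.
  have {}allPre : forall a, a \in A -> exists2 z, z \in A & n z = a.
    move=> a aA; move/hasPn: allPre => /(_ a aA) /allPn [z zA].
    by rewrite negbK => /eqP nz; exists z.
  have inj : {in A &, injective n}.
    apply/card_in_imfsetP; rewrite eqn_leq; apply/andP; split.
      have := leq_imfset_card _ n (mem A).
      by apply.
    apply: fsubset_leq_card; apply/fsubsetP => a aA.
    by have [z zA <-] := allPre a aA; apply: in_imfset.
  have [/eqP A0|/fset0Pn [a aA]] := boolP (A == fset0).
    exists fset0; split; first by rewrite fsub0set.
      by rewrite A0 cardfs0.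
    by move=> u; rewrite inE.
  have [z zA nz] := allPre a aA.
  set b := n a.
  have ba : b != a by apply: hn.
  have za : z != a by apply/eqP => eza; move: (hn z zA); rewrite nz eza eqxx.
  have pre_a : forall u, u \in A -> n u = a -> u = z.
    by move=> u uA nu; apply: inj => //; rewrite nu nz.
  have [bA|bA] := boolP ((b \in A) && (b != z)); last first.
  - have ha : a \in [fset z; a; b] by rewrite !inE eqxx !orbT.
    have [S' [SA hS vS]] := rec _ (ex_intro2 _ _ a aA ha).
    apply: (step (T := [fset a]) (Rm := [fset z; a; b])) SA hS vS.
    + by rewrite fsub1set.
    + by rewrite fsub1set.
    + rewrite cardfs1.
      have sub : A `&` [fset z; a; b] `<=` [fset z; a].
        apply/fsubsetP => x; rewrite !inE.
        case/andP => xA /orP[/orP[->|->]|/eqP xb]; rewrite ?orbT //.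
        by move: bA; rewrite -xb xA /= negbK => ->.
      apply: leq_trans (fsubset_leq_card sub) _; by rewrite cardfs2; case: (_ != _).
    + move=> u; rewrite inE => /eqP ->; left.
      by rewrite !inE negb_or -/b ba /= negb_and eqxx !orbT.
    + move=> u; rewrite in_fsetD => /andP[uR uA]; rewrite inE; apply/eqP => nu.
      by move: uR; rewrite (pre_a u uA nu) !inE eqxx.
    + move=> u _; rewrite in_fsetD => /andP[uR uA]; rewrite inE; apply/eqP => nu.
      by move: uR; rewrite (pre_a _ uA nu) !inE eqxx.
  case/andP: bA => bA bz.
  set c := n b.
  have cb : c != b by apply: hn.
  have ca : c != a by apply/eqP => ca; move: bz; rewrite (pre_a b bA ca) eqxx.
  have pre_b : forall u, u \in A -> n u = b -> u = a.
    by move=> u uA nu; apply: inj => //.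
  have ha : a \in [fset z; a; b; c] by rewrite !inE eqxx !orbT.
  have [S' [SA hS vS]] := rec _ (ex_intro2 _ _ a aA ha).
  apply: (step (T := [fset a; b]) (Rm := [fset z; a; b; c])) SA hS vS.
  + by rewrite fsubUset !fsub1set aA bA.
  + by rewrite fsubUset !fsub1set !inE !eqxx !orbT.
  + rewrite cardfs2 eq_sym ba.
    exact: leq_trans (cardI_le _ _) (card4_le _ _ _ _).
  + move=> u; rewrite !inE => /orP[/eqP ->|/eqP ->].
    * right; rewrite -/b -/c (negbTE ca) (negbTE cb) eqxx !orbT.
      done.
    * left; rewrite -/c (negbTE ca) (negbTE cb) eqxx !orbT.
      done.
  + move=> u; rewrite in_fsetD => /andP[uR uA]; rewrite !inE; apply/negP.
    case/orP => /eqP nu.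
    * by move: uR; rewrite (pre_a u uA nu) !inE eqxx.
    * by move: uR; rewrite (pre_b u uA nu) !inE eqxx !orbT.
  + move=> u _; rewrite in_fsetD => /andP[uR uA]; rewrite !inE; apply/negP.
    case/orP => /eqP nu.
    * by move: uR; rewrite (pre_a _ uA nu) !inE eqxx.
    * by move: uR; rewrite (pre_b _ uA nu) !inE eqxx !orbT.
Qed.
End Graph.

Local Open Scope ring_scope.

Lemma divz4_le (x : int) (s : nat) : (x < 4 * (s%:Z + 1))%R -> ((x %/ 4)%Z <= s%:Z)%R.
Proof. move=> h; have := @lez_floor x 4 isT; lia. Qed.

Section Dist.
Variables (R : realFieldType) (X : choiceType) (d : X -> X -> R).

Lemma bigmin_le p q0 s q : q \in q0 :: s -> \big[Num.min/d p q0]_(x <- s) d p x <= d p q.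
Proof.
elim: s q => [|a s IH] q; first by rewrite big_nil inE => /eqP ->.
rewrite big_cons ge_min inE => /orP[/eqP ->|].
  by rewrite IH ?orbT // inE eqxx.
rewrite inE => /orP[/eqP ->|qs]; first by rewrite lexx.
by rewrite IH ?orbT // inE qs orbT.
Qed.

Lemma bigmin_ex p q0 s : exists2 q, q \in q0 :: s & \big[Num.min/d p q0]_(x <- s) d p x = d p q.
Proof.
elim: s => [|a s [q qin IH]]; first by exists q0; rewrite ?big_nil ?inE.
rewrite big_cons IH minEle; case: ifP => _.
  by exists a; rewrite // !inE eqxx orbT.
by exists q => //; move: qin; rewrite !inE => /orP[->|->]; rewrite ?orbT.
Qed.

Lemma dist_le p (W : {fset X}) q : q \in W -> dist_set d p W <= d p q.
Proof.
have -> : (q \in W) = (q \in enum_fset W) by [].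
rewrite /dist_set; case: (enum_fset W) => [//|q0 s]; exact: bigmin_le.
Qed.

Lemma dist_ex p (W : {fset X}) : W != fset0 -> exists2 q, q \in W & dist_set d p W = d p q.
Proof.
case/fset0Pn => x xW.
have : x \in enum_fset W by [].
rewrite /dist_set; case E: (enum_fset W) => [//|q0 s] _.
have [q qin ->] := bigmin_ex p q0 s; exists q => //.
by have : q \in enum_fset W by rewrite E.
Qed.

Hypothesis hd : is_metric d.

Lemma d_ge0 x y : 0 <= d x y. Proof. by case: hd. Qed.
Lemma d_sym x y : d x y = d y x. Proof. by case: hd. Qed.
Lemma d_tri x y z : d x z <= d x y + d y z. Proof. by case: hd. Qed.
Lemma d_eq0 x y : d x y = 0 -> x = y. Proof. by case: hd => _ h _ _; case: (h x y). Qed.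
Lemma d_xx x : d x x = 0. Proof. by case: hd => _ h _ _; case: (h x x) => _ ->. Qed.

Lemma dist_ge0 p (W : {fset X}) : 0 <= dist_set d p W.
Proof.
rewrite /dist_set; case: (enum_fset W) => [//|q0 s].
by have [q _ ->] := bigmin_ex p q0 s; apply: d_ge0.
Qed.

Lemma dist_tri p x (W : {fset X}) : W != fset0 -> dist_set d x W <= d x p + dist_set d p W.
Proof.
move=> /(dist_ex p) [q qW ->]; apply: le_trans (dist_le x qW) _; exact: d_tri.
Qed.
End Dist.

Section Main.
Variables (R : realFieldType) (X : choiceType) (d : X -> X -> R) (hd : is_metric d).
Variables (U V : {fset X}).

Lemma ffoP x (S : {fset X}) c :
  reflect (forall y, y \in S -> y != x -> c <= d x y) (far_from_others d x S c).
Proof.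
apply: (iffP allP) => h y yS.
  by move=> yx; move: (h y yS); rewrite (negbTE yx).
by case: eqP => //= /eqP yx; apply: h.
Qed.

Lemma ws_nearest u v w : well_separated d U V u v -> w \in V -> d u w <= d u v -> w = v.
Proof.
case/and4P => uU vV _ /ffoP fv wV le; apply/eqP; apply/negP => /negP wv.
have h1 := fv w wV wv.
have h2 := d_tri hd v u w.
rewrite (d_sym hd v u) in h2.
have g0 := d_ge0 hd u v.
have : d v w <= 0 by rewrite /gamma in h1; lra.
move=> h3; have h4 : d v w = 0 by apply/le_anti; rewrite h3 d_ge0.
by move/eqP: wv; rewrite (d_eq0 hd h4).
Qed.

End Main.

Section Count.
Variables (R : realFieldType) (X : choiceType) (d : X -> X -> R) (hd : is_metric d).
Variables (U V : {fset X}).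
Local Notation g := (gamma R).
Local Notation C := (2 * gamma R + 2).

Lemma arith_vp (x1 x2 y1 y2 D a b : R) : 0 <= x1 -> 0 <= x2 -> C * x1 < D -> C * x2 < D ->
  y1 < g * x1 -> y2 < g * x2 -> D <= x1 + a -> a <= y1 + b -> b <= y2 + x2 -> False.
Proof. rewrite /gamma; lra. Qed.
Lemma arith_M (xu xw y D a : R) : 0 <= xu -> 0 <= xw -> C * xu < D -> y < g * xu ->
  g * xw <= y -> D <= xu + a -> a <= y + xw -> False.
Proof. rewrite /gamma; lra. Qed.
Lemma arith_I (xu xw y D a : R) : 0 <= xu -> 0 <= xw -> C * xu < D -> C * xw < D ->
  y < g * xu -> D <= xu + a -> a <= y + xw -> False.
Proof. rewrite /gamma; lra. Qed.
Lemma arith_nv (x1 x2 D : R) : 0 <= x1 -> 0 <= x2 -> g * x1 <= D -> g * x2 <= D ->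
  D <= x1 + x2 -> D <= 0.
Proof. rewrite /gamma; lra. Qed.
Lemma arith_CI (x D : R) : 0 <= x -> C * x < D -> g * x <= D.
Proof. rewrite /gamma; lra. Qed.

Lemma count_V (nv vp : X -> X) (M I : {fset X}) :
  (forall u, nv u \in V) ->
  (forall u, u \in I -> [/\ vp u \in V, vp u != nv u & d (nv u) (vp u) < g * d u (nv u)]) ->
  (forall u, u \in M -> forall u', u' \in U -> u' != u -> g * d u (nv u) <= d u u') ->
  (forall u, u \in M -> forall w, w \in V -> w != nv u -> g * d u (nv u) <= d (nv u) w) ->
  (forall u, u \in I -> forall u', u' \in U -> u' != u -> C * d u (nv u) < d u u') ->
  M `<=` U -> I `<=` U -> M `&` I = fset0 ->
  (#|` M| + 2 * #|` I| <= #|` V|)%N.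
Proof.
move=> nvV hI hM hMp hIs MU IU MI0.
have ge := d_ge0 hd.
have QMI : forall u, u \in M `|` I -> forall u', u' \in U -> u' != u -> g * d u (nv u) <= d u u'.
  move=> u; rewrite in_fsetU => /orP[uM|uI]; first exact: hM.
  move=> u' u'U u'u; apply: arith_CI; [exact: ge | exact: hIs].
have injnv : {in M `|` I &, injective nv}.
  move=> u1 u2 h1 h2 e; apply/eqP; apply/negP => /negP ne.
  have u1U : u1 \in U by move: h1; rewrite in_fsetU => /orP[/(fsubsetP MU)|/(fsubsetP IU)].
  have u2U : u2 \in U by move: h2; rewrite in_fsetU => /orP[/(fsubsetP MU)|/(fsubsetP IU)].
  have ne' : u2 != u1 by rewrite eq_sym.
  have a1 := QMI u1 h1 u2 u2U ne'.
  have a2 := QMI u2 h2 u1 u1U ne.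
  have t := d_tri hd u1 (nv u1) u2.
  rewrite e (d_sym hd (nv u2) u2) in t; rewrite (d_sym hd u2 u1) in a2.
  rewrite e in a1.
  have h0 := arith_nv (ge _ _) (ge _ _) a1 a2 t.
  by move/eqP: ne; apply; apply: (d_eq0 hd); apply/le_anti; rewrite h0 ge.
have injvp : {in I &, injective vp}.
  move=> u1 u2 h1 h2 e; apply/eqP; apply/negP => /negP ne.
  have u1U : u1 \in U by apply: (fsubsetP IU).
  have u2U : u2 \in U by apply: (fsubsetP IU).
  have ne' : u2 != u1 by rewrite eq_sym.
  have a1 := hIs u1 h1 u2 u2U ne'.
  have a2 := hIs u2 h2 u1 u1U ne.
  rewrite (d_sym hd u2 u1) in a2.
  have [_ _ b1] := hI u1 h1; have [_ _ b2] := hI u2 h2.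
  have t1 := d_tri hd u1 (nv u1) u2.
  have t2 := d_tri hd (nv u1) (vp u1) u2.
  have t3 := d_tri hd (vp u1) (nv u2) u2.
  rewrite (d_sym hd (vp u1) (nv u2)) (d_sym hd (nv u2) u2) in t3.
  rewrite -e in b2.
  exact: (arith_vp (ge _ _) (ge _ _) a1 a2 b1 b2 t1 t2 t3).
have disj : forall u w, u \in I -> w \in M `|` I -> vp u != nv w.
  move=> u w uI wMI; apply/eqP => e.
  have [vpV vpn b] := hI u uI.
  have uU : u \in U by apply: (fsubsetP IU).
  have gu := ge u (nv u); have gw := ge w (nv w).
  have t1 := d_tri hd u (nv u) w.
  have t2 := d_tri hd (nv u) (vp u) w.
  have ew : d (vp u) w = d w (nv w) by rewrite e d_sym.
  rewrite ew in t2.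
  move: wMI; rewrite in_fsetU => /orP[wM|wI].
  - have wU : w \in U by apply: (fsubsetP MU).
    have wu : w != u.
      apply/eqP => wu; have : w \in M `&` I by rewrite in_fsetI wM wu uI.
      by rewrite MI0 inE.
    have a := hIs u uI w wU wu.
    have nn : nv u != nv w by rewrite -e eq_sym.
    have c := hMp w wM (nv u) (nvV u) nn.
    have {}c : g * d w (nv w) <= d (nv u) (vp u) by rewrite e (d_sym hd (nv u)).
    exact: (arith_M gu gw a b c t1 t2).
  - have wU : w \in U by apply: (fsubsetP IU).
    have [wu|wu] := eqVneq w u.
      by move: vpn; rewrite e wu eqxx.
    have a1 := hIs u uI w wU wu.
    have uw : u != w by rewrite eq_sym.
    have a2 := hIs w wI u uU uw.
    rewrite (d_sym hd w u) in a2.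
    exact: (arith_I gu gw a1 a2 b t1 t2).
have sub : nv @` (M `|` I) `|` vp @` I `<=` V.
  apply/fsubsetP => x; rewrite in_fsetU => /orP[/imfsetP [u _ ->]|/imfsetP [u uI ->]].
    exact: nvV.
  by have [] := hI u uI.
have cap : nv @` (M `|` I) `&` vp @` I = fset0.
  apply/eqP; rewrite -fsubset0; apply/fsubsetP => x.
  rewrite in_fsetI => /andP[/imfsetP [w wMI ->] /imfsetP [u uI e]].
  by move: (disj u w uI wMI); rewrite e eqxx.
have := fsubset_leq_card sub.
have := cardfsUI (nv @` (M `|` I)) (vp @` I); rewrite cap cardfs0 addn0 => ->.
move/card_in_imfsetP/eqP: injnv => ->; move/card_in_imfsetP/eqP: injvp => ->.
have := cardfsUI M I; rewrite MI0 cardfs0 addn0.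
lia.
Qed.
End Count.

Lemma sum_card (T : choiceType) (U : {fset T}) (P : pred T) :
  (\sum_(u <- U) (P u : nat) = #|` [fset u in U | P u]|)%N.
Proof.
rewrite [RHS]card_fset_sum1 -big_fset_condE [RHS]big_mkcond /=.
by apply: eq_bigr => u _; case: (P u).
Qed.

Lemma arith_final (R : realFieldType) (dt dU dV x c : R) : 0 <= dU -> 0 <= dV ->
  dt <= dU + 2 * (2 * gamma R + 2) * x -> x <= dU + dV ->
  dt <= 6%:R * gamma R * (dU + dV).
Proof. rewrite /gamma => *; lra. Qed.

Lemma arith_triv (R : realFieldType) (dU dV : R) : 0 <= dU -> 0 <= dV ->
  dU <= 6%:R * gamma R * (dU + dV).
Proof. rewrite /gamma => *; lra. Qed.

Lemma arith_key0 (R : realFieldType) (x : R) : 0 <= x -> 0 <= 2 * (2 * gamma R + 2) * x.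
Proof. rewrite /gamma => *; lra. Qed.

Lemma arith_key1 (R : realFieldType) (x D : R) : 0 <= x -> D <= (2 * gamma R + 2) * x ->
  D <= 2 * (2 * gamma R + 2) * x.
Proof. rewrite /gamma => *; lra. Qed.

Lemma arith_key2 (R : realFieldType) (x D a b : R) : D <= (2 * gamma R + 2) * x ->
  a <= D + b -> b <= D -> a <= 2 * (2 * gamma R + 2) * x.
Proof. rewrite /gamma => *; lra. Qed.

Unset Implicit Arguments.

Theorem lemma4p2 (R : realFieldType) (X : choiceType) (d : X -> X -> R)
  (hd : is_metric d) (k r m : nat) (hk : (1 <= k)%N) (hm : (m <= k)%N)
  (P U V : {fset X}) (hU : #|` U| = k) (hV : #|` V| = (k + r)%N)
  (hws : num_well_separated d U V = (k - m)%N) :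
  exists Ut : {fset X},
    [/\ Ut `<=` U, Ut != fset0,
        (#|` Ut|%:Z <= k%:Z - ((m%:Z - r%:Z) %/ 4)%Z)%R
      & cost d Ut P <= 6%:R * gamma R * (cost d U P + cost d V P)].
Proof.
have ge := d_ge0 hd.
have costP : forall Ut, (forall p, dist_set d p Ut <= 6%:R * gamma R * (dist_set d p U + dist_set d p V)) ->
    cost d Ut P <= 6%:R * gamma R * (cost d U P + cost d V P).
  move=> Ut h; rewrite /cost -big_split mulr_sumr /=; apply: ler_sum => p _; exact: h.
have U0 : U != fset0 by rewrite -cardfs_gt0 hU.
have V0 : V != fset0 by rewrite -cardfs_gt0 hV; lia.
case: (ltnP 1 k) => hk2; last first.
  exists U; split => //.
    have := @divz4_le (m%:Z - r%:Z) 0; rewrite hU; lia.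
  apply: costP => p; apply: arith_triv; exact: dist_ge0.
pose D x := dist_set d x (U `\ x).
pose dl x := dist_set d x V.
have exU : forall x, exists q, (q \in U `\ x) && (d x q == D x).
  move=> x; have : U `\ x != fset0.
    by rewrite -cardfs_gt0; have := cardfsD1 x U; case: (x \in U) => /=; lia.
  by case/(dist_ex d x) => q qin e; exists q; rewrite qin /D e eqxx.
pose n x := xchoose (exU x).
have nP : forall x, n x \in U `\ x /\ d x (n x) = D x.
  by move=> x; have /andP[? /eqP ?] := xchooseP (exU x).
have exV : forall x, exists q, (q \in V) && (d x q == dl x).
  by move=> x; case/(dist_ex d x): V0 => q qin e; exists q; rewrite qin /dl e eqxx.
pose nv x := xchoose (exV x).
have nvP : forall x, nv x \in V /\ d x (nv x) = dl x.
  by move=> x; have /andP[? /eqP ?] := xchooseP (exV x).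
have exV2 : forall x, exists q, (q \in V `\ x) && (d x q == dist_set d x (V `\ x)).
  move=> x; have : V `\ x != fset0.
    by rewrite -cardfs_gt0; have := cardfsD1 x V; case: (x \in V) => /=; lia.
  by case/(dist_ex d x) => q qin e; exists q; rewrite qin e eqxx.
pose n2 x := xchoose (exV2 x).
have n2P : forall x, n2 x \in V `\ x /\ d x (n2 x) = dist_set d x (V `\ x).
  by move=> x; have /andP[? /eqP ?] := xchooseP (exV2 x).
pose vp x := n2 (nv x).
pose matched u := has (well_separated d U V u) (enum_fset V).
pose C := 2 * gamma R + 2.
pose M := [fset u in U | matched u].
pose I := [fset u in U | ~~ matched u && (C * dl u < D u)].
pose A := [fset u in U | ~~ matched u && ~~ (C * dl u < D u)].
have ws_nv : forall u v, well_separated d U V u v -> nv u = v.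
  move=> u v ws; have [nvV e] := nvP u.
  apply: (ws_nearest hd ws nvV); rewrite e; apply: dist_le.
  by case/and4P: ws.
have matchedP : forall u, matched u -> well_separated d U V u (nv u).
  by move=> u /hasP [v _ ws]; rewrite (ws_nv u v ws).
have hM : #|` M| = (k - m)%N.
  rewrite -hws /num_well_separated -sum_card.
  apply: eq_big_seq => u uU.
  case: (boolP (matched u)) => mu.
    have ws := matchedP u mu.
    have nvV : nv u \in V by case/and4P: ws.
    rewrite (big_fsetD1 (nv u)) //= ws big1_fset // => w.
    rewrite in_fsetD1 => /andP[wn wV] _; case: (boolP (well_separated d U V u w)) => // ws'.
    by move: wn; rewrite (ws_nv u w ws') eqxx.
  rewrite big1_fset // => v vV _; case: (boolP (well_separated d U V u v)) => // ws.
  have : matched u by apply/hasP; exists v.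
  by rewrite (negbTE mu).
have hpart : (#|` M| + #|` I| + #|` A| = k)%N.
  rewrite -!sum_card -!big_split /= -hU card_fset_sum1.
  by apply: eq_bigr => u _; case: (matched u); case: (C * dl u < D u).
have MU : M `<=` U by apply/fsubsetP => u; rewrite inE => /andP[].
have IU : I `<=` U by apply/fsubsetP => u; rewrite inE => /andP[].
have AU : A `<=` U by apply/fsubsetP => u; rewrite inE => /andP[].
have MI0 : M `&` I = fset0.
  apply/eqP; rewrite -fsubset0; apply/fsubsetP => u.
  by rewrite !inE => /andP[/andP[_ ->] /andP[_ /andP[]]].
have Cpos : 0 <= C by rewrite /C /gamma; lra.
have hIs : forall u, u \in I -> forall u', u' \in U -> u' != u -> C * d u (nv u) < d u u'.
  move=> u; rewrite inE => /andP[uU /andP[_ lt]] u' u'U u'u.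
  have [_ ->] := nvP u; apply: (lt_le_trans lt); apply: dist_le.
  by rewrite in_fsetD1 u'u u'U.
have hMM : forall u, u \in M -> forall u', u' \in U -> u' != u -> gamma R * d u (nv u) <= d u u'.
  move=> u; rewrite inE => /andP[uU mu].
  by case/and4P: (matchedP u mu) => _ _ /ffoP h _; apply: h.
have hMp : forall u, u \in M -> forall w, w \in V -> w != nv u -> gamma R * d u (nv u) <= d (nv u) w.
  move=> u; rewrite inE => /andP[uU mu].
  by case/and4P: (matchedP u mu) => _ _ _ /ffoP h; apply: h.
have hI : forall u, u \in I -> [/\ vp u \in V, vp u != nv u & d (nv u) (vp u) < gamma R * d u (nv u)].
  move=> u uI; have := uI; rewrite inE => /andP[uU /andP[nm lt]].
  have [nvV _] := nvP u.
  have [] := n2P (nv u); rewrite -/(vp u) in_fsetD1 => /andP[vpn vpV] e.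
  split => //.
  have farU : far_from_others d u U (gamma R * d u (nv u)).
    apply/ffoP => y yU yu; apply: arith_CI; first exact: ge.
    exact: hIs.
  have : ~~ well_separated d U V u (nv u).
    by apply/negP => ws; move/negP: nm; apply; apply/hasP; exists (nv u).
  rewrite /well_separated uU nvV farU /= => /allPn [y yV].
  rewrite negb_or => /andP[yn /negP hlt].
  rewrite e; apply: (le_lt_trans (@dist_le _ _ d (nv u) _ y _)).
    by rewrite in_fsetD1 yn.
  by rewrite ltNge; apply/negP.
have hcount := count_V hd (fun u => proj1 (nvP u)) hI hMM hMp hIs MU IU MI0.
have hnA : {in A, forall x, n x != x}.
  by move=> x _; have [] := nP x; rewrite in_fsetD1 => /andP[].
have [S [SA hSA vS]] := graph_main (leqnn #|` A|) hnA.
have SU : S `<=` U := fsubset_trans SA AU.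
have key : forall u0, u0 \in U -> exists2 w, w \in U `\` S & d u0 w <= 2 * C * dl u0.
  move=> u0 u0U.
  have dl0 : 0 <= dl u0 by apply: dist_ge0.
  have [u0S|u0S] := boolP (u0 \in S); last first.
    exists u0; first by rewrite in_fsetD u0S u0U.
    by rewrite (d_xx hd); apply: arith_key0.
  have : u0 \in A by apply: (fsubsetP SA).
  rewrite inE => /andP[_ /andP[_]]; rewrite -leNgt => Dle.
  have [nin ne] := nP u0; move: nin; rewrite in_fsetD1 => /andP[nu0 nU].
  have [nS|nS] := boolP (n u0 \in S); last first.
    exists (n u0); first by rewrite in_fsetD nS nU.
    by rewrite ne; apply: arith_key1.
  have nnS : n (n u0) \notin S by move: (vS u0 u0S); rewrite nS.
  have [nnin nne] := nP (n u0); move: nnin; rewrite in_fsetD1 => /andP[_ nnU].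
  exists (n (n u0)); first by rewrite in_fsetD nnS nnU.
  apply: (arith_key2 Dle); first by rewrite -ne; apply: d_tri.
  rewrite nne -ne (d_sym hd u0); apply: dist_le.
  by rewrite in_fsetD1 eq_sym nu0 u0U.
exists (U `\` S); split.
- exact: fsubsetDl.
- case/fset0Pn: U0 => u uU; have [w wU _] := key u uU.
  by apply/fset0Pn; exists w.
- have hS : (#|` S| <= k)%N by rewrite -hU; apply: fsubset_leq_card.
  have := cardfsDS SU; rewrite hU => ->.
  have hq := @divz4_le (m%:Z - r%:Z) #|` S|.
  move: hcount; rewrite hV hM => hcount.
  have : ((m%:Z - r%:Z) < 4 * (#|` S|%:Z + 1))%R by lia.
  move/hq; lia.
- apply: costP => p.
  have [u0 u0U e0] := dist_ex d p U0.
  have [w wUt hw] := key u0 u0U.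
  apply: (@arith_final _ _ _ _ (dl u0) 0); try exact: dist_ge0.
    apply: le_trans (dist_le _ _ wUt) _; rewrite e0.
    by apply: le_trans (d_tri hd p u0 w) _; rewrite lerD2l.
  by rewrite e0 (d_sym hd); apply: dist_tri.
Qed.
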